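(* There exists an absolute constant $c > 0$ such that for every even $n \in \mathbb{N}$ and every integer $m \geqslant \sqrt{n}$, the number of sum-free subsets of $[n]$ of size $m$ is at least $2^{cn/m} \binom{n/2}{m}$.
   Context: $[n] = \{1,\ldots,n\}$. A set of integers is sum-free if it contains no $x,y,z$ (not necessarily distinct) with $x+y=z$. The paper writes the conclusion as $2^{\Omega(n/m)}\binom{n/2}{m}$, with $\Omega(\cdot)$ hiding an absolute constant. *)

(* Defs.v *)
From Stdlib Require Import Reals.
From mathcomp Require Import all_boot.

(* Subsets of [n] = {1,...,n} are encoded as sets A : {set 'I_n}, where the
   ordinal i stands for the integer i+1. *)

Definition sum_free (n : nat) (A : {set 'I_n}) : bool :=
  [forall x in A, forall y in A, forall z in A, (x.+1 + y.+1 != z.+1)%N].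

Definition num_sum_free (n m : nat) : nat :=
  #|[set A : {set 'I_n} | sum_free n A & (#|A| == m)%N]|%N.

(* Main.v *)
Require Import Defs.
From Stdlib Require Import Reals.
From mathcomp Require Import all_boot.
From mathcomp Require Import zify.
From Stdlib Require Import Lra.
Set Implicit Arguments. Unset Strict Implicit.

Lemma lexp x y e : x <= y -> x ^ e <= y ^ e.
Proof. move=> h; elim: e => [|e IH] //; rewrite !expnS; exact: leq_mul. Qed.

Lemma pow_succ_ge x k : x ^ k * (x + k) <= (x + 1) ^ k * x.
Proof.
elim: k => [|k IH]; first by rewrite !expn0 addn0.
rewrite !expnS.
set a := x ^ k. set b := (x+1)^k.
have : a * (x + k) <= b * x := IH.
nia.
Qed.

Lemma fact_bound k : 2 ^ k * k`! <= 2 * k ^ k.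
Proof.
elim: k => [|k IH]; first by [].
case: k IH => [|k] IH; first by [].
have H1 := pow_succ_ge k.+1 k.+1.
rewrite factS expnS (expnS k.+2).
set a := k.+1 ^ k.+1 in H1 IH *.
set b := (k.+1 + 1) ^ k.+1 in H1 *.
have -> : k.+2 = k.+1 + 1 by rewrite addn1.
set f := k.+1`! in IH *.
set p := 2 ^ k.+1 in IH *.
nia.
Qed.

Lemma ffact_ge d k : (d - k) ^ k <= d ^_ k.
Proof.
elim: k d => [|k IH] d; first by [].
case: d => [|d]; first by rewrite sub0n exp0n.
rewrite ffactSS expnS.
apply: leq_mul; first by rewrite leq_subr.
rewrite subSS; exact: IH.
Qed.

Lemma bin_lower d k : 2 ^ k * (d - k) ^ k <= 'C(d, k) * (2 * k ^ k).
Proof.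
have H := fact_bound k.
have H2 := ffact_ge d k.
rewrite -bin_ffact in H2.
have F : 0 < k`! := fact_gt0 k.
set C := 'C(d,k) in H2 *. set f := k`! in H H2 F.
set p := 2 ^ k in H *. set q := k ^ k in H *. set r := (d-k)^k in H2 *.
nia.
Qed.

Lemma bin_down a m j : j <= m -> 'C(a, m) * (m - j) ^ j <= 'C(a, m - j) * a ^ j.
Proof.
elim: j => [|j IH] hj; first by rewrite subn0 !expn0.
have hj' : j <= m by lia.
have IH' := IH hj'.
have E : (m - j) = (m - j.+1).+1 by lia.
have Hb := mul_bin_left a (m - j.+1).
rewrite -E in Hb.
rewrite !expnS.
have L1 : (m - j.+1) ^ j <= (m - j) ^ j by apply: lexp; lia.
set C0 := 'C(a, m) in IH' *. set C1 := 'C(a, m-j) in IH' Hb *.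
set C2 := 'C(a, m - j.+1) in Hb *.
set u := (m - j.+1) ^ j in L1 *. set v := (m - j) ^ j in L1 IH' *.
set w := a ^ j in IH' *.
set t := m - j.+1 in E Hb L1 *.
have S1 : C0 * (t * u) <= t * (C1 * w).
  apply: (@leq_trans (t * (C0 * v))); last by rewrite leq_mul2l IH' orbT.
  rewrite mulnCA leq_mul2l; apply/orP; right; by rewrite leq_mul2l L1 orbT.
apply: (leq_trans S1).
have S2 : t * (C1 * w) <= (m - j) * C1 * w.
  rewrite mulnA; apply: leq_mul => //; apply: leq_mul => //; rewrite E; exact: leqnSn.
apply: (leq_trans S2). rewrite Hb. have : a - t <= a := leq_subr t a. nia.
Qed.



Lemma bin_shift a b m : a <= b.+1 -> 'C(b.+1, m) * (a - m) <= a * 'C(b, m).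
Proof.
move=> hab.
have H := mul_bin_down b.+1 m. rewrite /= in H.
case: (leqP m a) => hma; last first.
  have -> : a - m = 0 by lia.
  by rewrite muln0.
case: (leqP b.+1 m) => hbm.
  have -> : a - m = 0 by lia.
  by rewrite muln0.
have hp : 0 < b.+1 - m by lia.
set C1 := 'C(b.+1, m) in H *. set C0 := 'C(b, m) in H *.
have K : (a - m) * b.+1 <= a * (b.+1 - m).
  have e1 : a = (a - m) + m by lia. have e2 : b.+1 = (b.+1 - m) + m by lia.
  have hs : a - m <= b.+1 - m by lia.
  set s0 := a - m in e1 hs *. set r0 := b.+1 - m in e2 hs *.
  rewrite e2 e1. nia.
have : C1 * (a - m) * (b.+1 - m) <= a * C0 * (b.+1 - m).
  have E3 : C1 * (a - m) * (b.+1 - m) = (a - m) * ((b.+1 - m) * C1).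
    by lia.
  rewrite E3 -H. 
  set P := a - m in K *. set Q := b.+1 - m in K *. set R := b.+1 in K *.
  have -> : a * C0 * Q = C0 * (a * Q) by lia.
  have -> : P * (R * C0) = C0 * (P * R) by lia.
  by rewrite leq_mul2l K orbT.
by rewrite leq_mul2r (negbTE (lt0n_neq0 hp)) /=.
Qed.

Lemma bin_ground a D m : 'C(a + D, m) * (a - m) ^ D <= 'C(a, m) * a ^ D.
Proof.
elim: D => [|D IH]; first by rewrite !addn0 !expn0.
rewrite !expnS addnS.
have H := bin_shift (b := a + D) m (leq_trans (leq_addr D a) (leqnSn _)).
set C1 := 'C((a + D).+1, m) in H *. set C0 := 'C(a + D, m) in H IH *.
set Ca := 'C(a, m) in IH *. set u := (a - m) ^ D in IH *. set w := a ^ D in IH *.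
apply: (@leq_trans (a * C0 * u)).
  by rewrite mulnA leq_mul2r H orbT.
by rewrite -mulnA [Ca * _]mulnCA leq_mul2l IH orbT.
Qed.


Lemma card_interval n lo hi : hi <= n -> #|[set i : 'I_n | lo <= i < hi]| = hi - lo.
Proof.
move=> hn.
case: (leqP hi lo) => hl.
  have -> : [set i : 'I_n | lo <= i < hi] = set0.
    apply/setP => i; rewrite !inE; apply/negbTE; apply/negP => /andP[h1 h2]; lia.
  rewrite cards0; lia.
have P (j : 'I_(hi - lo)) : lo + j < n.
  have := ltn_ord j; lia.
pose f (j : 'I_(hi - lo)) := Ordinal (P j).
have finj : injective f.
  move=> j1 j2 /(congr1 val) /= h; apply: val_inj => /=; lia.
have -> : [set i : 'I_n | lo <= i < hi] = f @: setT.
  apply/setP => i; rewrite inE; apply/idP/imsetP.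
    move=> /andP[h1 h2].
    have hj : i - lo < hi - lo by lia.
    exists (Ordinal hj); first by rewrite inE.
    apply: val_inj => /=; lia.
  case=> j _ ->; rewrite /=; have := ltn_ord j; lia.
by rewrite card_imset // cardsT card_ord.
Qed.


Lemma sum_freeP n (A : {set 'I_n}) :
  (forall x y z : 'I_n, x \in A -> y \in A -> z \in A -> x.+1 + y.+1 != z.+1) -> sum_free n A.
Proof.
move=> H; apply/forallP => x; apply/implyP => hx; apply/forallP => y; apply/implyP => hy.
apply/forallP => z; apply/implyP => hz; exact: H.
Qed.

Section Main.
Variables N m d k : nat.
Hypothesis h3d : 3 * d <= N.
Hypothesis hkm : 2 * k <= m.

Local Notation n := (N + N).

Definition Lset := [set i : 'I_n | N - d <= i < N].
Definition Bset := [set i : 'I_n | N <= i < N + d].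
Definition Rset := [set i : 'I_n | N + d <= i < n].

Definition hsum (p : 'I_n * 'I_n) : 'I_n := insubd p.1 (p.1 + p.2).+1.

Lemma hsumE (x y z : 'I_n) : x.+1 + y.+1 = z.+1 -> hsum (x, y) = z.
Proof.
move=> e; apply: val_inj; rewrite /hsum val_insubd /=.
have hz := ltn_ord z.
have -> : (x + y).+1 < n by lia.
lia.
Qed.

Definition Fset (X Y : {set 'I_n}) := (hsum @: setX X X) :|: (hsum @: setX X Y).
Definition Gset (X Y : {set 'I_n}) := Rset :\: Fset X Y.

Definition Xs := [set X : {set 'I_n} | X \subset Lset & #|X| == k].
Definition Ys := [set X : {set 'I_n} | X \subset Bset & #|X| == k].
Definition Zs (X Y : {set 'I_n}) := [set Z : {set 'I_n} | Z \subset Gset X Y & #|Z| == m - 2 * k].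

Definition Dom := [set p : ({set 'I_n} * {set 'I_n}) * {set 'I_n} |
  (p.1.1 \in Xs) && (p.1.2 \in Ys) && (p.2 \in Zs p.1.1 p.1.2)].

Definition fA (p : ({set 'I_n} * {set 'I_n}) * {set 'I_n}) := p.1.1 :|: p.1.2 :|: p.2.

Lemma cardL : #|Lset| = d.
Proof. rewrite /Lset card_interval; lia. Qed.
Lemma cardB : #|Bset| = d.
Proof. rewrite /Bset card_interval; lia. Qed.
Lemma cardR : #|Rset| = N - d.
Proof. rewrite /Rset card_interval; lia. Qed.

Lemma cardF (X Y : {set 'I_n}) : #|X| = k -> #|Y| = k -> #|Fset X Y| <= 2 * k * k.
Proof.
move=> hX hY; rewrite /Fset cardsU.
have h1 := leq_imset_card hsum (setX X X).
have h2 := leq_imset_card hsum (setX X Y).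
rewrite !cardsX hX hY in h1 h2. apply: (leq_trans (leq_subr _ _)); rewrite -mulnA mul2n -addnn; exact: leq_add h1 h2.
Qed.

Lemma cardG (X Y : {set 'I_n}) : #|X| = k -> #|Y| = k -> N - d - 2 * k * k <= #|Gset X Y|.
Proof.
move=> hX hY; rewrite /Gset cardsD cardR.
have := cardF hX hY.
have : #|Rset :&: Fset X Y| <= #|Fset X Y| by apply: subset_leq_card; apply: subsetIr.
lia.
Qed.


Lemma cardDom : 'C(d, k) * 'C(d, k) * 'C(N - d - 2 * k * k, m - 2 * k) <= #|Dom|.
Proof.
rewrite -sum1_card.
pose P (xy : {set 'I_n} * {set 'I_n}) := (xy.1 \in Xs) && (xy.2 \in Ys).
pose Q (xy : {set 'I_n} * {set 'I_n}) (Z : {set 'I_n}) := Z \in Zs xy.1 xy.2.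
have -> : \sum_(p in Dom) 1 = \sum_(p | P p.1 && Q p.1 p.2) 1.
  apply: eq_bigl => p; by rewrite /Dom inE.
rewrite -(pair_big_dep P Q (fun _ _ => 1)) /=.
apply: (@leq_trans (\sum_(xy | P xy) 'C(N - d - 2 * k * k, m - 2 * k))).
  rewrite sum_nat_const.
  have -> : #|[pred xy | P xy]| = #|setX Xs Ys|.
    apply: eq_card => xy. by rewrite !inE /P /Xs /Ys !inE andbA.
  rewrite cardsX /Xs /Ys !cards_draws cardL cardB. done.
apply: leq_sum => xy /andP[hx hy].
rewrite sum1_card.
have -> : #|[pred Z | Q xy Z]| = #|Zs xy.1 xy.2| by apply: eq_card => Z.
rewrite /Zs cards_draws. apply: leq_bin2l.
rewrite /Xs /Ys !inE in hx hy.
case/andP: hx => _ /eqP hx; case/andP: hy => _ /eqP hy.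
exact: cardG.
Qed.


Lemma memDom p : p \in Dom ->
  [/\ p.1.1 \subset Lset /\ #|p.1.1| = k, p.1.2 \subset Bset /\ #|p.1.2| = k &
      p.2 \subset Gset p.1.1 p.1.2 /\ #|p.2| = m - 2 * k].
Proof.
rewrite /Dom /Xs /Ys /Zs !inE => /andP[/andP[/andP[h1 /eqP h2] /andP[h3 /eqP h4]] /andP[h5 /eqP h6]].
by split.
Qed.

Lemma inL (X : {set 'I_n}) x : X \subset Lset -> x \in X -> N - d <= x < N.
Proof. by move=> /subsetP s /s; rewrite inE. Qed.
Lemma inB (X : {set 'I_n}) x : X \subset Bset -> x \in X -> N <= x < N + d.
Proof. by move=> /subsetP s /s; rewrite inE. Qed.
Lemma inG (X Y Z : {set 'I_n}) x : Z \subset Gset X Y -> x \in Z -> N + d <= x /\ x \notin Fset X Y.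
Proof. by move=> /subsetP s /s; rewrite /Gset !inE => /andP[-> /andP[-> _]]. Qed.

Lemma disj (A B : {set 'I_n}) : (forall x, x \in A -> x \in B -> False) -> #|A :|: B| = #|A| + #|B|.
Proof.
move=> H; rewrite cardsU.
have -> : A :&: B = set0.
  apply/setP => x; rewrite !inE; apply/negbTE/negP => /andP[h1 h2]; exact: H h1 h2.
by rewrite cards0 subn0.
Qed.

Lemma fA_card p : p \in Dom -> #|fA p| = m.
Proof.
case/memDom => [[hL hX] [hB hY] [hG hZ]].
rewrite /fA disj.
  rewrite disj ?hX ?hY ?hZ; first lia.
  move=> x /(inL hL) h1 /(inB hB) h2; lia.
move=> x; rewrite inE => /orP[/(inL hL) h1 | /(inB hB) h1] /(inG hG) [h2 _]; lia.
Qed.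

Lemma fA_sf p : p \in Dom -> sum_free n (fA p).
Proof.
case/memDom => [[hL hX] [hB hY] [hG hZ]].
apply: sum_freeP => x y z.
rewrite /fA !inE.
have hzn := ltn_ord z.
move=> hx hy hz; apply/eqP => e.
case/orP: hz => [/orP[/(inL hL) hz | /(inB hB) hz] | /(inG hG) [hz hzF]].
- case/orP: hx => [/orP[/(inL hL) | /(inB hB)] | /(inG hG) []] => ?;
  case/orP: hy => [/orP[/(inL hL) | /(inB hB)] | /(inG hG) []] => ?; lia.
- case/orP: hx => [/orP[/(inL hL) | /(inB hB)] | /(inG hG) []] => ?;
  case/orP: hy => [/orP[/(inL hL) | /(inB hB)] | /(inG hG) []] => ?; lia.
- move: hzF; rewrite /Fset inE negb_or => /andP[nF1 nF2].
  case/orP: hx => [/orP[hx | hx] | hx]; case/orP: hy => [/orP[hy | hy] | hy].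
  + move/negP: nF1; apply; apply/imsetP; exists (x, y); first by rewrite inE hx hy.
    by rewrite (hsumE e).
  + move/negP: nF2; apply; apply/imsetP; exists (x, y); first by rewrite inE hx hy.
    by rewrite (hsumE e).
  + have := inL hL hx; have := inG hG hy; lia.
  + move/negP: nF2; apply; apply/imsetP; exists (y, x); first by rewrite inE hx hy.
    by rewrite (hsumE (z := z)) //; lia.
  + have := inB hB hx; have := inB hB hy; lia.
  + have := inB hB hx; have := inG hG hy; lia.
  + have := inG hG hx; have := inL hL hy; lia.
  + have := inG hG hx; have := inB hB hy; lia.
  + have := inG hG hx; have := inG hG hy; lia.
Qed.


Lemma fA_inj : {in Dom &, injective fA}.
Proof.
move=> [[X Y] Z] [[X' Y'] Z'] hp hp' e.
have kL q : q \in Dom -> fA q :&: Lset = q.1.1.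
  case/memDom => [[hL _] [hB _] [hG _]].
  apply/setP => x; rewrite /fA !inE.
  case hx: (x \in q.1.1); first by rewrite /=; exact: inL hL hx.
  rewrite /=; apply/negbTE/negP => /andP[/orP[hb | hg] hl].
  + have := inB hB hb; move: hl; lia.
  + have := inG hG hg; move: hl; lia.
have kB q : q \in Dom -> fA q :&: Bset = q.1.2.
  case/memDom => [[hL _] [hB _] [hG _]].
  apply/setP => x; rewrite /fA !inE.
  case hx: (x \in q.1.2); first by rewrite orbT /=; exact: inB hB hx.
  rewrite orbF /=; apply/negbTE/negP => /andP[/orP[hb | hg] hl].
  + have := inL hL hb; move: hl; lia.
  + have := inG hG hg; move: hl; lia.
have kR q : q \in Dom -> fA q :&: Rset = q.2.
  case/memDom => [[hL _] [hB _] [hG _]].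
  apply/setP => x; rewrite /fA !inE.
  case hx: (x \in q.2).
    rewrite orbT /=; have := inG hG hx; have := ltn_ord x; lia.
  rewrite orbF /=; apply/negbTE/negP => /andP[/orP[hb | hg] hl].
  + have := inL hL hb; move: hl; lia.
  + have := inB hB hg; move: hl; lia.
have e1 := kL _ hp; have e2 := kB _ hp; have e3 := kR _ hp.
rewrite e (kL _ hp') in e1; rewrite e (kB _ hp') in e2; rewrite e (kR _ hp') in e3.
by rewrite /= in e1 e2 e3; rewrite e1 e2 e3.
Qed.

Lemma main_count :
  'C(d, k) * 'C(d, k) * 'C(N - d - 2 * k * k, m - 2 * k) <= num_sum_free n m.
Proof.
apply: (leq_trans cardDom).
rewrite -(card_in_imset fA_inj) /num_sum_free.
apply: subset_leq_card; apply/subsetP => A /imsetP[p hp ->].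
by rewrite inE fA_sf // fA_card // eqxx.
Qed.

End Main.

Lemma card_even N : #|[set i : 'I_(N + N) | ~~ odd i]| = N.
Proof.
have P (j : 'I_N) : j.*2 < N + N. have := ltn_ord j; rewrite -!addnn; lia.
pose f (j : 'I_N) := Ordinal (P j).
have finj : injective f.
  move=> j1 j2 /(congr1 val) /= h; apply: val_inj => /=; rewrite -!addnn in h; lia.
have -> : [set i : 'I_(N + N) | ~~ odd i] = f @: setT.
  apply/setP => i; rewrite inE; apply/idP/imsetP.
    move=> hi.
    have hj : i./2 < N.
      have := ltn_ord i; have := odd_double_half i; rewrite (negbTE hi) -addnn /=; lia.
    exists (Ordinal hj); first by rewrite inE.
    apply: val_inj => /=. have := odd_double_half i. rewrite (negbTE hi) -addnn /=. lia.
  case=> j _ ->; by rewrite /= odd_double.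
by rewrite card_imset // cardsT card_ord.
Qed.

Lemma ebinL N m : 2 <= N -> 1 <= m -> 'C(N, m) = 'C(N.-1, m) + 'C(N.-1, m.-1).
Proof. by case: N => [|N'] // _; case: m => [|m'] // _. Qed.
Lemma ediagL N m : 1 <= m -> N * 'C(N.-1, m.-1) = m * 'C(N, m).
Proof. by case: m => [|m'] // _; rewrite mul_bin_diag. Qed.

Lemma two_fam N m : 2 <= N -> 1 <= m -> 'C(N, m) * (N + m) <= num_sum_free (N + N) m * N.
Proof.
move=> hN hm.
set O := [set i : 'I_(N + N) | ~~ odd i].
set U := [set i : 'I_(N + N) | N <= i < N + N].
set FO := [set A : {set 'I_(N+N)} | A \subset O & #|A| == m].
set FU := [set A : {set 'I_(N+N)} | A \subset U & #|A| == m].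
have cO : #|FO| = 'C(N, m) by rewrite cards_draws card_even.
have cU : #|FU| = 'C(N, m) by rewrite cards_draws card_interval // (_ : N + N - N = N) //; lia.
have cI : #|FO :&: FU| <= 'C(N.-1, m).
  have -> : FO :&: FU = [set A : {set 'I_(N+N)} | A \subset O :&: U & #|A| == m].
    apply/setP => A; rewrite !inE subsetI. by case: (A \subset O); case: (A \subset U); case: (#|A| == m).
  rewrite cards_draws; apply: leq_bin2l.
  have hU : #|U| = N by rewrite card_interval //; lia.
  have pr : O :&: U \proper U.
    rewrite properE subsetIr /=; apply/negP => /subsetP sub.
    have h1 : N < N + N by lia.
    have h2 : N.+1 < N + N by lia.
    case hodd: (odd N).
      by have := sub (Ordinal h1); rewrite !inE /= hodd /= leqnn h1 => /(_ isT).
    by have := sub (Ordinal h2); rewrite !inE /= hodd /= leqnSn h2 => /(_ isT).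
  have := proper_card pr. rewrite hU => h. by rewrite -ltnS prednK // (leq_trans _ hN).
have hsub : FO :|: FU \subset [set A : {set 'I_(N + N)} | sum_free (N+N) A & #|A| == m].
  apply/subsetP => A; rewrite !inE => /orP[/andP[sO hA] | /andP[sU hA]]; rewrite hA andbT;
    apply: sum_freeP => x y z hx hy hz; apply/eqP => e.
  + move: (subsetP sO x hx) (subsetP sO y hy) (subsetP sO z hz); rewrite !inE => ox oy oz.
    have : z = (x + y).+1 :> nat by lia.
    move=> ez; move: oz; rewrite ez /= oddD (negbTE ox) (negbTE oy) //.
  + move: (subsetP sU x hx) (subsetP sU y hy) (subsetP sU z hz); rewrite !inE; lia.
have hnum : #|FO :|: FU| <= num_sum_free (N + N) m by apply: subset_leq_card.
rewrite cardsU cO cU in hnum.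
have ebin := ebinL hN hm.
have ediag := ediagL N hm.
set C := 'C(N, m) in hnum ebin ediag *. set C1 := 'C(N.-1, m) in cI ebin *.
set C2 := 'C(N.-1, m.-1) in ebin ediag.
set I := #|FO :&: FU| in hnum cI.
set S := num_sum_free (N + N) m in hnum *.
nia.
Qed.


Lemma reg_facts N m : N + N <= m * m -> 0 < m -> 3000 <= N %/ m ->
  let q := N %/ m in let t := q %/ 320 in let k := 4 * t in
  let d := k * (2 * q + 3) in let D := d + 2 * k * k in let a := N - d - 2 * k * k in
  let E := 9 * t + 1 in
  [/\ 3 * d <= N, 2 * k <= m, D * m <= E * (a - m), m < a & a + D = N] /\
  [/\ d - k = 2 * k * (q + 1), 39 * N <= 40 * ((q + 1) * (m - 2 * k)), 9 <= t & 0 < k] /\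
  N < 320 * (t + 1) * m.
Proof.
move=> hmm hm hq q t k d D a E.
have F1 : q * m <= N.
  have := divn_eq N m; rewrite -/q => e. rewrite [X in _ <= X]e. exact: leq_addr.
have F1' : N < (q + 1) * m by have := ltn_ceil N hm; rewrite -/q addn1.
have F3 : t * 320 <= q.
  have := divn_eq q 320; rewrite -/t => e. rewrite [X in _ <= X]e. exact: leq_addr.
have F3' : q < (t + 1) * 320 by have := ltn_ceil q (isT : 0 < 320); rewrite -/t addn1.
have F4 : 3000 <= q by [].
have Ek : k = 4 * t := erefl. have Ed : d = k * (2 * q + 3) := erefl.
have ED : D = d + 2 * k * k := erefl. have Ea : a = N - d - 2 * k * k := erefl.
have EE : E = 9 * t + 1 := erefl.
clearbody E a D d k t q.
have G1 : 2 * q <= m.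
  rewrite -(leq_pmul2r hm). have : 2 * q * m = 2 * (q * m) by rewrite mulnA. lia.
have G2 : 2 * q * q <= N.
  apply: leq_trans F1. rewrite mulnC leq_mul2l G1 orbT //.
have G3 : 3000 * m <= N by apply: leq_trans F1; rewrite leq_mul2r F4 orbT.
have G4 : t * 320 * m <= N by apply: leq_trans F1; rewrite leq_mul2r F3 orbT.
have G5 : (t * 320) * (t * 320) <= q * q by apply: leq_mul.
have ht : 9 <= t by lia.
have hd : d * 80 <= q * (2 * q + 3).
  have -> : d * 80 = (t * 320) * (2 * q + 3) by rewrite Ed Ek; nia.
  by rewrite leq_mul2r F3 orbT.
have hq6 : 3000 * (2 * q) <= N by lia.
have hkk : 3200 * (2 * k * k) <= N.
  have -> : 3200 * (2 * k * k) = (t * 320) * (t * 320) by rewrite Ek; nia.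
  lia.
have hD : 70 * D <= N by rewrite ED; lia.
have G6 : 9 * D + 21 * m + 32 * t * m <= N by lia.
split; [split|split; [split|]].
- lia.
- rewrite Ek; lia.
- have ea : a - m = N - D - m by rewrite Ea ED; lia.
  rewrite ea EE.
  have e1 : D * m = 8 * t * (q * m) + 12 * (t * m) + 32 * t * (t * m).
    rewrite ED Ed Ek; lia.
  have e2 : t * (9 * D + 21 * m + 32 * t * m) <= t * N by rewrite leq_mul2l G6 orbT.
  have e3 : t * (q * m) <= t * N by rewrite leq_mul2l F1 orbT.
  have hDm : D + m <= N by lia.
  have e5 : (9 * t + 1) * (N - D - m) = 9 * (t * N) - 9 * (t * D) - 9 * (t * m) + (N - D - m).
    rewrite mulnDl !mulnBr; lia.
  lia.
- rewrite Ea; lia.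
- rewrite Ea ED; lia.
- rewrite Ed Ek; lia.
- have h1 : 80 * k * (q + 1) <= N.
    have -> : 80 * k * (q + 1) = (t * 320) * (q + 1) by rewrite Ek; lia.
    apply: (@leq_trans (q * (q + 1))); first by rewrite leq_mul2r F3 orbT.
    lia.
  have hk : 2 * k <= m by rewrite Ek; lia.
  have e : (q + 1) * (m - 2 * k) = (q + 1) * m - (q + 1) * (2 * k) by rewrite mulnBr.
  rewrite e. lia.
- lia.
- rewrite Ek; lia.
- have : (q + 1) * m <= (t + 1) * 320 * m by rewrite leq_mul2r; apply/orP; right; lia.
  lia.
Qed.

Section RealPart.
Local Open Scope R_scope.

Lemma INR_expn a b : INR (a ^ b)%N = INR a ^ b.
Proof. elim: b => [|b IH] //=. by rewrite expnS mult_INR IH. Qed.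

Lemma INR_leq a b : (a <= b)%N -> INR a <= INR b.
Proof. by move/leP; apply: le_INR. Qed.

Lemma exp_pow_nat x n : exp x ^ n = exp (INR n * x).
Proof.
elim: n => [|n IH]; first by rewrite /= Rmult_0_l exp_0.
rewrite S_INR -tech_pow_Rmult IH -exp_plus; f_equal; ring.
Qed.

Lemma exp_ratio A M D E : 0 < M -> M < A -> INR D * M <= INR E * (A - M) ->
  A ^ D <= 3 ^ E * (A - M) ^ D.
Proof.
move=> hM hA h.
set y := M / (A - M).
have hAM : 0 < A - M by lra.
have hy : 0 < y by apply: Rdiv_lt_0_compat.
have eA : A = (A - M) * (1 + y) by rewrite /y; field; lra.
rewrite {1}eA Rpow_mult_distr [3 ^ E * _]Rmult_comm.
apply: Rmult_le_compat_l; first by apply: pow_le; lra.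
apply: Rle_trans (_ : exp y ^ D <= _).
  apply: pow_incr; split; first lra. exact: exp_ineq1_le.
rewrite exp_pow_nat.
apply: Rle_trans (_ : exp (INR E * 1) <= _).
  have h2 : INR D * y <= INR E * 1.
    rewrite /y Rmult_1_r. apply (Rmult_le_reg_r (A - M)) => //.
    rewrite Rmult_assoc /Rdiv Rmult_assoc Rinv_l; lra.
  case: h2 => h2; [left; exact: exp_increasing | by rewrite h2; right].
rewrite -exp_pow_nat. apply: pow_incr; split; [left; exact: exp_pos | exact: exp_le_3].
Qed.

Lemma num_check : 135 / 100 * (3 ^ 9 * 40 ^ 8 * 2) <= 16 ^ 4 * 39 ^ 8.
Proof. lra. Qed.
Lemma num_check2 : 12 <= (135/100) ^ 9.
Proof. lra. Qed.

Lemma pow_mul_nat x a b : x ^ (a * b)%N = (x ^ a) ^ b.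
Proof. exact: pow_mult. Qed.
Lemma pow_add_nat x a b : x ^ (a + b)%N = x ^ a * x ^ b.
Proof. exact: pow_add. Qed.

Lemma final_pow t : (9 <= t)%N ->
  4 * 3 ^ (9 * t + 1)%N * 40 ^ (2 * (4 * t))%N * 2 ^ t <= 16 ^ (4 * t)%N * 39 ^ (2 * (4 * t))%N.
Proof.
move=> ht.
rewrite pow_add_nat !pow_mul_nat.
have -> : (40 ^ 2) ^ 4 = 40 ^ 8 by ring.
have -> : (39 ^ 2) ^ 4 = 39 ^ 8 by ring.
have -> : 3 ^ 1 = 3 by ring.
set a := 3 ^ 9. set b := 40 ^ 8. set c := 16 ^ 4. set e := 39 ^ 8.
have hpos : 0 < a * b * 2 by rewrite /a /b; lra.
have h1 := num_check. rewrite -/a -/b -/c -/e in h1.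
have h2 : (135/100) ^ 9 <= (135/100) ^ t.
  apply: Rle_pow; [lra | exact/leP].
have h3 : ((135/100) * (a * b * 2)) ^ t <= (c * e) ^ t.
  apply: pow_incr; split => //; lra.
rewrite Rpow_mult_distr in h3.
have h4 := num_check2.
rewrite -!Rpow_mult_distr.
have hab : 0 < (a * b * 2) ^ t by apply: pow_lt.
have : 12 * (a * b * 2) ^ t <= (c * e) ^ t by nra.
rewrite !Rpow_mult_distr.
nra.
Qed.

Lemma combine (num Cd Ca Cam CN N a m2k Qp am kr : R) (k D E : nat) :
  0 <= num -> 0 <= Cd -> 0 <= Ca -> 0 <= Cam -> 0 <= CN -> 0 < N -> 0 <= a -> 0 <= m2k ->
  0 <= Qp -> 0 < am -> 0 < kr ->
  Cd * Cd * Ca <= num ->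
  2 ^ k * (2 * kr * Qp) ^ k <= Cd * (2 * kr ^ k) ->
  Cam * m2k ^ (2 * k)%N <= Ca * a ^ (2 * k)%N ->
  CN * am ^ D <= Cam * a ^ D ->
  a ^ D <= 3 ^ E * am ^ D ->
  a <= N ->
  39 * N <= 40 * (Qp * m2k) ->
  16 ^ k * 39 ^ (2 * k)%N * CN <= num * 4 * 3 ^ E * 40 ^ (2 * k)%N.
Proof.
move=> p1 p2 p3 p4 p5 p6 p7 p8 p9 p10 p11 H1 H2 H3 H4 H5 H6 H7.
have hamD : 0 < am ^ D by apply: pow_lt.
have A1 : 39 ^ (2 * k)%N * N ^ (2 * k)%N <= 40 ^ (2 * k)%N * ((Qp ^ k * Qp ^ k) * m2k ^ (2 * k)%N).
  have h0 : 0 <= 39 * N by lra.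
  have h := pow_incr (39 * N) (40 * (Qp * m2k)) (2 * k)%N (conj h0 H7).
  rewrite (Rpow_mult_distr 39 N) (Rpow_mult_distr 40) (Rpow_mult_distr Qp m2k) in h.
  have eQ : Qp ^ (2 * k)%N = Qp ^ k * Qp ^ k by rewrite -pow_add_nat addnn -mul2n.
  by rewrite eQ in h.
set P := am ^ D in hamD H4 H5. set A := a ^ D in H4 H5. set T := 3 ^ E in H5 *.
have hT : 0 < T by apply: pow_lt; lra.
have A2 : CN <= T * Cam.
  have : CN * P <= T * Cam * P by nra.
  move=> h; apply: (Rmult_le_reg_r P) => //.
have haN : a ^ (2 * k)%N <= N ^ (2 * k)%N by apply: pow_incr; lra.
set M2 := m2k ^ (2 * k)%N in H3 A1 *. set A2' := a ^ (2 * k)%N in H3 haN.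
set N2 := N ^ (2 * k)%N in haN A1 *.
have hM2 : 0 <= M2 by apply: pow_le.
have A3 : Cam * M2 <= Ca * N2.
  apply: Rle_trans H3 _; apply: Rmult_le_compat_l => //.
have hkk : 0 < kr ^ k by apply: pow_lt.
have A4 : 4 ^ k * Qp ^ k <= 2 * Cd.
  rewrite !Rpow_mult_distr in H2.
  have e4 : 4 ^ k = 2 ^ k * 2 ^ k by rewrite -Rpow_mult_distr; f_equal; ring.
  rewrite e4.
  apply: (Rmult_le_reg_r (kr ^ k)) => //. nra.
have e16 : 16 ^ k = 4 ^ k * 4 ^ k by rewrite -Rpow_mult_distr; f_equal; ring.
rewrite e16.
set F := 4 ^ k in A4 *. set Qk := Qp ^ k in A4 A1. set W := 40 ^ (2 * k)%N in A1 *.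
set Y := 39 ^ (2 * k)%N in A1 *.
have hN2 : 0 < N2 by apply: pow_lt.
have hF : 0 < F by apply: pow_lt; lra.
have hQk : 0 <= Qk by apply: pow_le.
have hW : 0 < W by apply: pow_lt; lra.
have hY : 0 < Y by apply: pow_lt; lra.
apply: (Rmult_le_reg_r N2) => //.
have B1 : F * F * Y * CN * N2 <= F * F * CN * (W * (Qk * Qk * M2)).
  have hx : 0 <= F * F * CN by repeat apply: Rmult_le_pos; lra.
  have := Rmult_le_compat_l _ _ _ hx A1.
  have -> : F * F * Y * CN * N2 = F * F * CN * (Y * N2) by ring. done.
have B2 : F * F * CN * (W * (Qk * Qk * M2)) <= F * F * W * Qk * Qk * T * (Cam * M2).
  have hx : 0 <= F * F * W * Qk * Qk * M2 by repeat apply: Rmult_le_pos; lra.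
  have := Rmult_le_compat_l _ _ _ hx A2.
  have -> : F * F * CN * (W * (Qk * Qk * M2)) = F * F * W * Qk * Qk * M2 * CN by ring.
  have -> : F * F * W * Qk * Qk * T * (Cam * M2) = F * F * W * Qk * Qk * M2 * (T * Cam) by ring.
  done.
have B3 : F * F * W * Qk * Qk * T * (Cam * M2) <= F * F * W * Qk * Qk * T * (Ca * N2).
  have hx : 0 <= F * F * W * Qk * Qk * T by repeat apply: Rmult_le_pos; lra.
  exact: Rmult_le_compat_l _ _ _ hx A3.
have B4 : F * F * W * Qk * Qk * T * (Ca * N2) <= (2 * Cd) * (2 * Cd) * W * T * Ca * N2.
  have hx : 0 <= W * T * Ca * N2 by repeat apply: Rmult_le_pos; lra.
  have hfq : 0 <= F * Qk by repeat apply: Rmult_le_pos; lra.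
  have h2 : (F * Qk) * (F * Qk) <= (2 * Cd) * (2 * Cd) by apply: Rmult_le_compat.
  have := Rmult_le_compat_l _ _ _ hx h2.
  have -> : F * F * W * Qk * Qk * T * (Ca * N2) = W * T * Ca * N2 * (F * Qk * (F * Qk)) by ring.
  have -> : (2 * Cd) * (2 * Cd) * W * T * Ca * N2 = W * T * Ca * N2 * (2 * Cd * (2 * Cd)) by ring.
  done.
have B5 : (2 * Cd) * (2 * Cd) * W * T * Ca * N2 <= num * 4 * T * W * N2.
  have hx : 0 <= 4 * W * T * N2 by repeat apply: Rmult_le_pos; lra.
  have := Rmult_le_compat_l _ _ _ hx H1.
  have -> : (2 * Cd) * (2 * Cd) * W * T * Ca * N2 = 4 * W * T * N2 * (Cd * Cd * Ca) by ring.
  have -> : num * 4 * T * W * N2 = 4 * W * T * N2 * num by ring.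
  done.
lra.
Qed.

End RealPart.


Lemma num_ge1 n : 1 <= num_sum_free n 0.
Proof.
rewrite /num_sum_free card_gt0; apply/set0Pn; exists set0.
rewrite inE cards0 eqxx andbT; apply: sum_freeP => x y z; by rewrite inE.
Qed.

Section RP2.
Local Open Scope R_scope.

Lemma reg2 (N m c : R) : 0 < m -> 0 < N -> N < 3000 * m -> c = 1 / 100000000 ->
  Rpower 2 (c * (N + N) / m) * N <= N + m.
Proof.
move=> hm hN hNm hc.
set x := c * (N + N) / m.
have hxm : x * m = c * (N + N) by rewrite /x; field; lra.
have hx0 : 0 <= x by rewrite /x hc; apply: Rmult_le_pos; [lra | left; apply: Rinv_0_lt_compat; lra].
have hx1 : x <= 1 / 2 by apply: (Rmult_le_reg_r m) => //; rewrite hxm hc; lra.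
have e1 : Rpower 2 x <= exp x.
  have h2 : 2 <= exp 1 by have := exp_ineq1_le 1; lra.
  have h3 : Rpower 2 x <= Rpower (exp 1) x.
    apply: Rle_Rpower_l => //; split; lra.
  apply: Rle_trans h3 _.
  by rewrite /Rpower ln_exp Rmult_1_r; right.
have e2 : exp x <= 1 + 2 * x.
  have h := exp_ineq1_le (- x).
  have hp : exp x * exp (- x) = 1 by rewrite -exp_plus Rplus_opp_r exp_0.
  have hpos : 0 < exp x := exp_pos x.
  nra.
have e3 : 2 * x * N <= m.
  apply: (Rmult_le_reg_r m) => //.
  have -> : 2 * x * N * m = 2 * N * (x * m) by ring.
  rewrite hxm hc. nra.
nra.
Qed.
End RP2.

Local Open Scope R_scope.
Theorem proposition3p1 :
  exists c : R, Rlt 0 c /\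
    forall n m : nat, ~~ odd n -> Rle (sqrt (INR n)) (INR m) ->
      Rle (Rmult (Rpower 2 (Rdiv (Rmult c (INR n)) (INR m))) (INR 'C(n./2, m)))
          (INR (num_sum_free n m)).
Proof.
exists (Rdiv 1 100000000); split; first lra.
move=> n m hn hsq.
have en : (n = n./2 + n./2)%N.
  have := odd_double_half n; rewrite (negbTE hn) add0n -addnn => e; by rewrite {1}e.
set N := n./2 in en *. clearbody N. subst n.
have hC0 : 0 <= INR (num_sum_free (N + N) m) by apply: pos_INR.
case: (ltnP N m) => hNm.
  by rewrite bin_small // Rmult_0_r.
have hsq2 : INR (N + N) <= INR m * INR m.
  have h1 := sqrt_sqrt (INR (N + N)) (pos_INR _).
  have h2 := sqrt_pos (INR (N + N)).
  nra.
have hmm : (N + N <= m * m)%N.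
  apply/leP; apply: INR_le; by rewrite mult_INR.
case: (posnP m) => hm0.
  subst m.
  have hN0 : N = 0%N by move: hmm; rewrite muln0; lia.
  subst N. rewrite /= Rmult_0_r /Rdiv Rmult_0_l Rpower_O; last lra.
  rewrite Rmult_1_l.
  have := num_ge1 (0 + 0). move/INR_leq => /=. lra.
have hN2 : (1 < N)%N by nia.
have hmR : 0 < INR m by apply: lt_0_INR; apply/ltP.
have hNR : 0 < INR N by apply: lt_0_INR; apply/ltP; lia.
case: (ltnP (N %/ m) 3000%N) => hq.
- have ht := two_fam hN2 hm0.
  have hN3 : (N < 3000 * m)%N.
    have := ltn_ceil N hm0. move=> h. apply: (leq_trans h). by rewrite leq_mul2r hq orbT.
  have hN3R : INR N < 3000 * INR m.
    have := lt_INR _ _ (ltP hN3). rewrite mult_INR. 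
    have -> : INR 3000 = 3000 by rewrite INR_IZR_INZ. done.
  have hr := reg2 hmR hNR hN3R (erefl _).
  rewrite plus_INR.
  move/INR_leq: ht. rewrite !mult_INR plus_INR => ht.
  set P := Rpower _ _ in hr *.
  set CN := INR 'C(N, m) in ht *.
  have hCN : (0 <= CN) by apply: pos_INR.
  apply: (Rmult_le_reg_r (INR N)) => //.
  nra.
- pose q := (N %/ m)%N. pose t := (q %/ 320)%N. pose k := (4 * t)%N.
  pose d := (k * (2 * q + 3))%N. pose D := (d + 2 * k * k)%N. pose a := (N - d - 2 * k * k)%N.
  pose E := (9 * t + 1)%N.
  have [[h3d hkm hDE hma haD] [[hdk h39 ht hk] hNt]] : ([/\ (3 * d <= N)%N, (2 * k <= m)%N, (D * m <= E * (a - m))%N, (m < a)%N & (a + D = N)%N] /\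
    [/\ (d - k = 2 * k * (q + 1))%N, (39 * N <= 40 * ((q + 1) * (m - 2 * k)))%N, (9 <= t)%N & (0 < k)%N] /\
    (N < 320 * (t + 1) * m)%N)%type := reg_facts hmm hm0 hq.
  have Ek : k = (4 * t)%N := erefl. have EE : E = (9 * t + 1)%N := erefl.
  have Ea : a = (N - d - 2 * k * k)%N := erefl.
  clearbody E a D d k.
  have hMC := main_count h3d hkm. rewrite -Ea in hMC.
  have hBL := bin_lower d k.
  have hBD := bin_down a hkm.
  have hBG := bin_ground a D m. rewrite haD in hBG.
  have hINR2 : INR 2 = 2 by [].
  move/INR_leq: hMC; rewrite !mult_INR => hMC.
  move/INR_leq: hBL; rewrite !mult_INR !INR_expn hdk !mult_INR hINR2 => hBL.
  move/INR_leq: hBD; rewrite !mult_INR !INR_expn => hBD.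
  move/INR_leq: hBG; rewrite !mult_INR !INR_expn => hBG.
  move/INR_leq: h39; rewrite !mult_INR => h39.
  have e39 : INR 39 = 39 by rewrite INR_IZR_INZ.
  have e40 : INR 40 = 40 by rewrite INR_IZR_INZ.
  rewrite e39 e40 in h39.
  have hamR : INR (a - m) = INR a - INR m by rewrite minus_INR //; apply/leP; exact: ltnW.
  have hmaR : INR m < INR a by apply: lt_INR; apply/ltP.
  have hER : INR a ^ D <= 3 ^ E * (INR a - INR m) ^ D.
    apply: exp_ratio => //.
    move/INR_leq: hDE. rewrite !mult_INR hamR. done.
  rewrite -hamR in hER.
  have ham0 : 0 < INR (a - m) by rewrite hamR; lra.
  have hk0 : 0 < INR k by apply: lt_0_INR; apply/ltP; exact: hk.
  have haN : INR a <= INR N by apply: INR_leq; lia.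
  have hcomb := combine (pos_INR _) (pos_INR _) (pos_INR _) (pos_INR _) (pos_INR _) hNR (pos_INR _)
     (pos_INR _) (pos_INR _) ham0 hk0 hMC hBL hBD hBG hER haN h39.
  have hfp : 4 * 3 ^ E * 40 ^ (2 * k)%N * 2 ^ t <= 16 ^ k * 39 ^ (2 * k)%N := ltac:(rewrite Ek EE; exact: final_pow ht).
  set CN := INR 'C(N, m) in hcomb *. set num := INR (num_sum_free (N + N) m) in hcomb *.
  have hCN : 0 <= CN by apply: pos_INR.
  set Z := 4 * 3 ^ E * 40 ^ (2 * k)%N in hfp.
  have hZ : 0 < Z by rewrite /Z; repeat apply: Rmult_lt_0_compat; try apply: pow_lt; lra.
  have key : 2 ^ t * CN <= num.
    apply: (Rmult_le_reg_r Z) => //.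
    have e1 : num * 4 * 3 ^ E * 40 ^ (2 * k)%N = num * Z by rewrite /Z; ring.
    rewrite e1 in hcomb.
    have := Rmult_le_compat_r CN _ _ hCN hfp.
    nra.
  apply: Rle_trans key.
  apply: Rmult_le_compat_r => //.
  rewrite -Rpower_pow; last lra.
  apply: Rle_Rpower; first lra.
  have hNtR : INR N <= 320 * (INR t + 1) * INR m.
    have := INR_leq (ltnW hNt). rewrite !mult_INR plus_INR.
    have -> : INR 320 = 320 by rewrite INR_IZR_INZ. done.
  have htR : 9 <= INR t.
    have := INR_leq ht. have -> : INR 9 = 9 by rewrite INR_IZR_INZ. done.
  rewrite plus_INR.
  apply: (Rmult_le_reg_r (INR m)) => //.
  have -> : 1 / 100000000 * (INR N + INR N) / INR m * INR m = 1 / 100000000 * (INR N + INR N).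
    field; lra.
  nra.
Qed.
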